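(* Let $\mathcal A$ be a topological algebra with hypocontinuous multiplication such that $\Omega(\mathcal A)$ separates the points of $\mathcal A^{**}$. Then every $\sigma(\mathcal A^{**},\mathcal A^* )$-cluster point in $\mathcal A^{**}$ of the set of idempotents of $J(\mathcal A)$ is again an idempotent with respect to both Arens products, i.e. if $a_i\in\mathcal A$ with $a_i^2=a_i$ and $J(a_i)\to u$ in $\sigma(\mathcal A^{**},\mathcal A^* )$, then $u\square u=u$ and $u\diamond u=u$.
   Context: $\Omega(\mathcal A)\subseteq\mathcal A^*$ denotes the set of continuous nonzero multiplicative linear functionals on $\mathcal A$; ''separates points of $\mathcal A^{**}$'' means for $u\ne v$ in $\mathcal A^{**}$ there is $f\in\Omega(\mathcal A)$ with $u(f)\ne v(f)$. $\mathcal A^*,\mathcal A^{**}$ carry strong dual topologies and $J:\mathcal A\to\mathcal A^{**}$ is the evaluation map. Multiplication is hypocontinuous: for every bounded $B\subseteq\mathcal A$ and $0$-neighbourhood $W$ there is a $0$-neighbourhood $V$ with $BV\subseteq W$ and $VB\subseteq W$. Arens products: for $f\in\mathcal A^*$, $a,b\in\mathcal A$, $f_a(b)=f(ab)$, ${}_af(b)=f(ba)$; for $u\in\mathcal A^{**}$, $f_u(b)=u({}_bf)$, ${}_uf(b)=u(f_b)$; $(u\square v)(f)=u({}_vf)$, $(u\diamond v)(f)=v(f_u)$. *)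

(* Defs.v *)
From HB Require Import structures.
From mathcomp Require Import all_boot all_order all_algebra.
From mathcomp Require Import all_classical all_reals all_analysis.
Set Implicit Arguments. Unset Strict Implicit. Unset Printing Implicit Defensive.
Import Order.TTheory GRing.Theory Num.Theory.
Import numFieldNormedType.Exports.
Local Open Scope classical_set_scope.
Local Open Scope ring_scope.

Section TopAlg.
Variables (K : numFieldType) (A : topologicalLmodType K).

Definition lin_functional (f : A -> K) : Prop :=
  forall (k : K) (a b : A), f (k *: a + b) = k * f a + f b.

Definition dual : set (A -> K) := [set f | lin_functional f /\ continuous f].

Definition tvs_bounded (B : set A) : Prop :=
  forall W : set A, nbhs 0 W ->
    exists r : K, 0 < r /\
      forall k : K, r <= `|k| -> B `<=` [set k *: w | w in W].

Definition bilinear_assoc (mul : A -> A -> A) : Prop :=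
  [/\ forall a b c, mul a (mul b c) = mul (mul a b) c,
      forall (k : K) a b c, mul (k *: a + b) c = k *: mul a c + mul b c
    & forall (k : K) a b c, mul c (k *: a + b) = k *: mul c a + mul c b].

Definition hypocontinuous (mul : A -> A -> A) : Prop :=
  forall B : set A, tvs_bounded B ->
  forall W : set A, nbhs 0 W ->
    exists V : set A, nbhs 0 V /\
      (forall b v, B b -> V v -> W (mul b v) /\ W (mul v b)).

(* Continuity of u : A^* -> K for the strong topology on A^* (topology of
   uniform convergence on bounded subsets of A), written out with the basis
   of neighbourhoods {f in A^* | forall a in B, |f a - f0 a| < d}. *)
Definition strong_continuous (u : (A -> K) -> K) : Prop :=
  forall f0, dual f0 -> forall e : K, 0 < e ->
    exists (B : set A) (d : K), [/\ tvs_bounded B, 0 < d &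
      forall f, dual f -> (forall a, B a -> `|f a - f0 a| < d) ->
        `|u f - u f0| < e].

(* A^** : strongly continuous linear functionals on A^*.  Elements are
   represented by functions (A -> K) -> K, only their values on A^* matter. *)
Definition bidual : set ((A -> K) -> K) :=
  [set u | (forall (k : K) f g, dual f -> dual g ->
             u (fun a => k * f a + g a) = k * u f + u g)
           /\ strong_continuous u].

Definition Jev (a : A) : (A -> K) -> K := fun f => f a.

Definition Omega (mul : A -> A -> A) : set (A -> K) :=
  [set f | dual f /\ (exists a, f a != 0) /\
           forall a b, f (mul a b) = f a * f b].

Definition separates_bidual (mul : A -> A -> A) : Prop :=
  forall u v, bidual u -> bidual v ->
    (exists g, dual g /\ u g != v g) ->
    exists f, Omega mul f /\ u f != v f.

(* Arens products:
   f_a(b) = f(ab), _a f(b) = f(ba), f_u(b) = u(_b f), _u f(b) = u(f_b),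
   (u [] v)(f) = u(_v f), (u <> v)(f) = v(f_u). *)
Definition arens_first (mul : A -> A -> A) (u v : (A -> K) -> K) :
  (A -> K) -> K :=
  fun f => u (fun b => v (fun c => f (mul b c))).

Definition arens_second (mul : A -> A -> A) (u v : (A -> K) -> K) :
  (A -> K) -> K :=
  fun f => v (fun b => u (fun c => f (mul c b))).

End TopAlg.

(* Main.v *)
Require Import Defs.
From HB Require Import structures.
From mathcomp Require Import all_boot all_order all_algebra.
From mathcomp Require Import all_classical all_reals all_analysis.
Import Order.TTheory GRing.Theory Num.Theory.
Import numFieldNormedType.Exports.
Local Open Scope classical_set_scope.
Local Open Scope ring_scope.
Set Implicit Arguments. Unset Strict Implicit.

Lemma lin0 (K : numFieldType) (A : topologicalLmodType K) (f : A -> K) :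
  lin_functional f -> f 0 = 0.
Proof.
move=> lf; have := lf 1 0 0; rewrite scale1r addr0 mul1r.
by move=> H; apply: (addrI (f 0)); rewrite addr0 -H.
Qed.

Lemma linD (K : numFieldType) (A : topologicalLmodType K) (f : A -> K) a b :
  lin_functional f -> f (a + b) = f a + f b.
Proof. by move=> lf; rewrite -[a in LHS]scale1r lf mul1r. Qed.

Lemma linZ (K : numFieldType) (A : topologicalLmodType K) (f : A -> K) k a :
  lin_functional f -> f (k *: a) = k * f a.
Proof. by move=> lf; rewrite -[_ *: _]addr0 lf lin0 ?addr0. Qed.

Lemma near_shift (K : numFieldType) (A : topologicalLmodType K) (x : A) U :
  nbhs 0 U -> nbhs x (fun t => U (t - x)).
Proof.
move=> U0.
have : (fun t => t - x) @ x --> x - x.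
  apply: (@continuous_comp _ _ _ (fun t => (t, x)) (fun z : A * A => z.1 - z.2)).
    by apply: cvg_pair; [exact: cvg_id|exact: cvg_cst].
  exact: sub_continuous.
by rewrite subrr => /(_ U U0).
Qed.

Lemma dual_near0 (K : numFieldType) (A : topologicalLmodType K) (f : A -> K) e :
  dual f -> 0 < e -> nbhs (0:A) [set w | `|f w| < e].
Proof.
move=> [lf cf] e0; have := cf 0 => /cvgrPdist_lt /(_ e e0).
apply: filterS => w /=; by rewrite lin0 // sub0r normrN.
Qed.

Lemma lin_cont (K : numFieldType) (A : topologicalLmodType K) (g : A -> K) :
  lin_functional g -> (forall e, 0 < e -> nbhs (0:A) [set w | `|g w| < e]) ->
  continuous g.
Proof.
move=> lg H x; apply/cvgrPdist_lt => e e0.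
have := @near_shift _ _ x _ (H e e0); apply: filterS => t /=.
move=> Ht; rewrite -[t](subrK x) (@linD _ _ g) //.
by rewrite opprD addrA addrAC subrr sub0r normrN.
Qed.

Lemma dual0 (K : numFieldType) (A : topologicalLmodType K) : dual (fun _ : A => (0:K)).
Proof. split; first by move=> *; rewrite mulr0 addr0. exact: cst_continuous. Qed.

Lemma bounded1 (K : numFieldType) (A : topologicalLmodType K) (b : A) :
  tvs_bounded [set b].
Proof.
move=> W W0.
have W0' : nbhs ((0:K^o) *: b) W by rewrite scale0r.
have := @scale_continuous K A ((0:K^o), b) W W0'.
move=> [[P Q] /= [P0 Q0] PQ].
move: P0 => /nbhs_norm0P [d /= d0 Hd].
exists (2 / d); split; first by rewrite divr_gt0.
move=> k hk _ ->.
have k0 : 0 < `|k| by apply: lt_le_trans hk; rewrite divr_gt0.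
have kn0 : k != 0 by rewrite -normr_gt0.
exists (k^-1 *: b); last by rewrite scalerA mulfV ?scale1r.
apply: (PQ (k^-1, b)); split; last exact: nbhs_singleton.
apply: Hd => /=.
rewrite normfV -[_^-1]mul1r ltr_pdivrMr //.
have : d * (2 / d) <= d * `|k| by rewrite ler_wpM2l // ltW.
rewrite mulrCA mulfV ?gt_eqF // mulr1; apply: lt_le_trans.
by rewrite ltr1n.
Qed.

Definition rlin (K : numFieldType) (A : topologicalLmodType K) (mul : A -> A -> A) :=
  forall (k : K) a b c, mul c (k *: a + b) = k *: mul c a + mul c b.
Definition llin (K : numFieldType) (A : topologicalLmodType K) (mul : A -> A -> A) :=
  forall (k : K) a b c, mul (k *: a + b) c = k *: mul a c + mul b c.

Lemma rlin0 (K : numFieldType) (A : topologicalLmodType K) (mul : A -> A -> A) c :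
  rlin mul -> mul c 0 = 0.
Proof.
move=> H; have := H 1 0 0 c; rewrite !scale1r addr0.
by move=> E; apply: (addrI (mul c 0)); rewrite addr0 -E.
Qed.

Lemma rlinZ (K : numFieldType) (A : topologicalLmodType K) (mul : A -> A -> A) k a c :
  rlin mul -> mul c (k *: a) = k *: mul c a.
Proof. by move=> H; rewrite -[k *: a]addr0 H rlin0 // addr0. Qed.

Lemma dual_comb (K : numFieldType) (A : topologicalLmodType K) (f g : A -> K) k :
  dual f -> dual g -> dual (fun a => k * f a + g a).
Proof.
move=> [lf cf] [lg cg]; split.
  move=> l a b; rewrite lf lg.
  rewrite mulrDr !mulrA (mulrC k l); by rewrite addrACA mulrDr mulrA.
move=> x; apply: cvgD; last exact: cg.
exact: cvgMl_tmp (cf x).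
Qed.

Lemma prod_bounded (K : numFieldType) (A : topologicalLmodType K) (mul : A -> A -> A)
  (B1 B2 : set A) :
  rlin mul -> hypocontinuous mul -> tvs_bounded B1 -> tvs_bounded B2 ->
  tvs_bounded [set x | exists b c, [/\ B1 b, B2 c & x = mul b c]].
Proof.
move=> rl hy b1 b2 W W0.
have [V [V0 HV]] := hy B1 b1 W W0.
have [r [r0 Hr]] := b2 V V0.
exists r; split => // k hk x [b [c [Bb Bc ->]]].
have [w Vw <-] := Hr k hk c Bc.
exists (mul b w); first exact: (HV b w Bb Vw).1.
by rewrite rlinZ.
Qed.

Lemma dual_left (K : numFieldType) (A : topologicalLmodType K) (mul : A -> A -> A)
  (f : A -> K) b :
  rlin mul -> hypocontinuous mul -> dual f -> dual (fun c => f (mul b c)).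
Proof.
move=> rl hy df; have [lf cf] := df.
have lg : lin_functional (fun c => f (mul b c)).
  by move=> k x y; rewrite rl lf.
split => //; apply: lin_cont => // e e0.
have [V [V0 HV]] := hy [set b] (bounded1 b) _ (dual_near0 df e0).
by apply: filterS V0 => v Vv; exact: (HV b v erefl Vv).1.
Qed.

Lemma bidual0 (K : numFieldType) (A : topologicalLmodType K) (v : (A -> K) -> K) :
  bidual v -> v (fun _ => 0) = 0.
Proof.
move=> [lv _]; have := lv 1 _ _ (dual0 A) (dual0 A).
have -> : (fun a : A => 1 * (0:K) + 0) = (fun _ => 0).
  by apply: funext => a; rewrite mul1r addr0.
rewrite mul1r => E; apply: (addrI (v (fun _ => 0))); by rewrite addr0 -E.
Qed.

Definition Tv (K : numFieldType) (A : topologicalLmodType K) (mul : A -> A -> A)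
  (v : (A -> K) -> K) (f : A -> K) : A -> K :=
  fun b => v (fun c => f (mul b c)).

Lemma dual_Tv (K : numFieldType) (A : topologicalLmodType K) (mul : A -> A -> A)
  (v : (A -> K) -> K) (f : A -> K) :
  llin mul -> rlin mul -> hypocontinuous mul -> bidual v -> dual f ->
  dual (Tv mul v f).
Proof.
move=> ll rl hy bv df; have [lf cf] := df; have [lv sv] := bv.
have lT : lin_functional (Tv mul v f).
  move=> k x y; rewrite /Tv.
  have -> : (fun c => f (mul (k *: x + y) c)) =
            (fun c => k * f (mul x c) + f (mul y c)).
    by apply: funext => c; rewrite ll lf.
  by rewrite (lv _ _ _ (dual_left x rl hy df) (dual_left y rl hy df)).
split => //; apply: lin_cont => // e e0.
have [B [d [bB d0 H]]] := sv _ (dual0 A) e e0.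
have [V [V0 HV]] := hy B bB _ (dual_near0 df d0).
apply: filterS V0 => b Vb /=.
have := H _ (dual_left b rl hy df).
rewrite bidual0 // subr0; apply => a Ba.
by rewrite subr0; exact: (HV a b Ba Vb).2.
Qed.

Lemma bidual_arens (K : numFieldType) (A : topologicalLmodType K) (mul : A -> A -> A)
  (u v : (A -> K) -> K) :
  llin mul -> rlin mul -> hypocontinuous mul -> bidual u -> bidual v ->
  bidual (arens_first mul u v).
Proof.
move=> ll rl hy bu bv; have [lu su] := bu; have [lv sv] := bv.
split.
  move=> k f g df dg; rewrite /arens_first.
  have -> : (fun b => v (fun c => k * f (mul b c) + g (mul b c))) =
            (fun b => k * Tv mul v f b + Tv mul v g b).
    by apply: funext => b; rewrite (lv _ _ _ (dual_left b rl hy df) (dual_left b rl hy dg)).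
  by rewrite (lu _ _ _ (dual_Tv ll rl hy bv df) (dual_Tv ll rl hy bv dg)).
move=> f0 df0 e e0.
have [B1 [d1 [b1 d10 H1]]] := su _ (dual_Tv ll rl hy bv df0) e e0.
have [B2 [d2 [b2 d20 H2]]] := sv _ (dual0 A) d1 d10.
exists [set x | exists b c, [/\ B1 b, B2 c & x = mul b c]], d2.
split => //; first exact: prod_bounded.
move=> f df Hf; apply: (H1 _ (dual_Tv ll rl hy bv df)) => b Bb.
pose g := fun c => (-1) * f0 (mul b c) + f (mul b c).
have df0b := dual_left b rl hy df0; have dfb := dual_left b rl hy df.
have dg : dual g by apply: dual_comb.
have E : Tv mul v f b - Tv mul v f0 b = v g.
  by rewrite /g (lv _ _ _ df0b dfb) /Tv mulN1r addrC.
rewrite E; have := H2 g dg; rewrite bidual0 // subr0; apply => c Bc.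
rewrite subr0 /g mulN1r addrC; apply: Hf.
by exists b, c.
Qed.

Lemma hypo_flip (K : numFieldType) (A : topologicalLmodType K) (mul : A -> A -> A) :
  hypocontinuous mul -> hypocontinuous (fun x y => mul y x).
Proof.
move=> hy B bB W W0; have [V [V0 HV]] := hy B bB W W0.
by exists V; split => // b v Bb Vv; have [? ?] := HV b v Bb Vv.
Qed.

Lemma biZ (K : numFieldType) (A : topologicalLmodType K) (v : (A -> K) -> K) (f : A -> K) k :
  bidual v -> dual f -> v (fun a => k * f a) = k * v f.
Proof.
move=> bv df; have [lv _] := bv.
have := lv k f _ df (dual0 A); rewrite bidual0 // addr0 => <-.
by congr v; apply: funext => a; rewrite addr0.
Qed.

Theorem mainTheorem14 (K : numFieldType) (A : topologicalLmodType K)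
  (mul : A -> A -> A) :
  bilinear_assoc mul -> hypocontinuous mul -> separates_bidual mul ->
  forall (I : Type) (F : set_system I), ProperFilter F ->
  forall (a : I -> A) (u : (A -> K) -> K),
    (forall i, mul (a i) (a i) = a i) ->
    bidual u ->
    (forall f, dual f -> (fun i => Jev (a i) f) @ F --> u f) ->
    forall f, dual f ->
      arens_first mul u u f = u f /\ arens_second mul u u f = u f.
Proof.
move=> [_ ll rl] hy sep I F PF a u aa bu cv.
have ll' : llin (fun x y => mul y x) by move=> k x y c; exact: rl.
have rl' : rlin (fun x y => mul y x) by move=> k x y c; exact: ll.
have hy' := hypo_flip hy.
have b1 := bidual_arens ll rl hy bu bu.
have b2 := bidual_arens ll' rl' hy' bu bu.
have idem : forall h, Omega mul h -> u h * u h = u h.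
  move=> h [dh [_ mh]].
  have H := cv h dh.
  have E : (fun i => Jev (a i) h * Jev (a i) h) = (fun i => Jev (a i) h).
    by apply: funext => i; rewrite /Jev -mh aa.
  have H' := cvgM H H; rewrite /GRing.mul_fun /= in H'.
  rewrite E in H'.
  have H2 := H' (@filter_filter _ _ PF). exact: (@cvg_unique _ (@norm_hausdorff K K) _ _ _ _ H2 H).
have om1 : forall h, Omega mul h -> arens_first mul u u h = u h.
  move=> h Oh; have [dh [_ mh]] := Oh.
  rewrite /arens_first.
  have -> : (fun b => u (fun c => h (mul b c))) = (fun b => u h * h b).
    apply: funext => b.
    have -> : (fun c => h (mul b c)) = (fun c => h b * h c).
      by apply: funext => c; rewrite mh.
    by rewrite biZ // mulrC.
  by rewrite biZ // idem.
have om2 : forall h, Omega mul h -> arens_second mul u u h = u h.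
  move=> h Oh; have [dh [_ mh]] := Oh.
  rewrite /arens_second.
  have -> : (fun b => u (fun c => h (mul c b))) = (fun b => u h * h b).
    apply: funext => b.
    have -> : (fun c => h (mul c b)) = (fun c => h b * h c).
      by apply: funext => c; rewrite mh mulrC.
    by rewrite biZ // mulrC.
  by rewrite biZ // idem.
move=> f df; split.
  case: (eqVneq (arens_first mul u u f) (u f)) => // ne; exfalso.
  have [h [Oh nh]] := sep _ _ b1 bu (ex_intro _ f (conj df ne)).
  by move: nh; rewrite om1 // eqxx.
case: (eqVneq (arens_second mul u u f) (u f)) => // ne; exfalso.
have [h [Oh nh]] := sep _ _ b2 bu (ex_intro _ f (conj df ne)).
by move: nh; rewrite (om2 h Oh : arens_first (fun x y => mul y x) u u h = u h) eqxx.
Qed.
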